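(* For every positive integer $d$ there is a graph $G$ with boxicity $2$ and cubicity larger than $d$.
   Context: For a simple undirected graph $G$, the boxicity of $G$ is the smallest dimension $d$ such that $G$ is (isomorphic to) the intersection graph of a family of axis-aligned boxes in $\mathbb{R}^d$ (one box per vertex, two distinct vertices adjacent iff their boxes intersect). The cubicity of $G$ is the smallest dimension $d$ such that $G$ is the intersection graph of a family of axis-aligned hypercubes in $\mathbb{R}^d$, where the hypercubes may have arbitrary (not necessarily equal) side lengths. *)

(* Defs.v *)
From mathcomp Require Import all_boot.
From Stdlib Require Import Reals.
Set Implicit Arguments. Unset Strict Implicit. Unset Printing Implicit Defensive.

Definition simple_graph (T : finType) (e : rel T) : Prop :=
  symmetric e /\ irreflexive e.

Definition intervals_meet (a1 b1 a2 b2 : R) : Prop :=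
  (a1 <= b2)%R /\ (a2 <= b1)%R.

Definition box_rep (T : finType) (e : rel T) (d : nat) : Prop :=
  exists (lo hi : T -> 'I_d -> R),
    (forall v i, (lo v i <= hi v i)%R) /\
    (forall u v, u != v ->
       (e u v <-> forall i, intervals_meet (lo u i) (hi u i) (lo v i) (hi v i))).

(* A hypercube representation in R^d: vertex v gets the closed axis-aligned
   hypercube prod_{i < d} [lo v i, lo v i + s v] with side length s v >= 0
   (side lengths may differ between vertices). *)
Definition cube_rep (T : finType) (e : rel T) (d : nat) : Prop :=
  exists (lo : T -> 'I_d -> R) (s : T -> R),
    (forall v, (0 <= s v)%R) /\
    (forall u v, u != v ->
       (e u v <-> forall i,
          intervals_meet (lo u i) (lo u i + s u)%R (lo v i) (lo v i + s v)%R)).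

Definition boxicity_eq (T : finType) (e : rel T) (k : nat) : Prop :=
  box_rep e k /\ forall j, (j < k)%N -> ~ box_rep e j.

Definition cubicity_gt (T : finType) (e : rel T) (d : nat) : Prop :=
  forall j, (j <= d)%N -> ~ cube_rep e j.

(* Main.v *)
Require Import Defs.
From mathcomp Require Import all_boot.
From Stdlib Require Import Reals Lra.

Set Implicit Arguments. Unset Strict Implicit.

Lemma exists_min (T : finType) (f : T -> R) (x0 : T) :
  exists v, forall u, (f v <= f u)%R.
Proof.
have H : forall l : seq T, exists v, forall u, u \in l -> (f v <= f u)%R.
  elim=> [|a l [v Hv]]; first by exists x0.
  destruct (Rle_dec (f a) (f v)) as [h|h].
  - exists a => u; rewrite in_cons => /orP [/eqP->|/Hv]; lra.
  - exists v => u; rewrite in_cons => /orP [/eqP->|/Hv]; lra.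
have [v Hv] := H (enum T).
by exists v => u; apply: Hv; rewrite mem_enum.
Qed.

Definition KG (N : nat) : rel (bool * 'I_N) := fun u v => u.1 != v.1.

Lemma KG_simple N : simple_graph (@KG N).
Proof.
split.
- by move=> u v; rewrite /KG eq_sym.
- by move=> u; rewrite /KG eqxx.
Qed.

Lemma KG_box N : box_rep (@KG N) 2.
Proof.
exists (fun (u : bool * 'I_N) (i : 'I_2) => if u.1 == (nat_of_ord i == 0%N) then INR (nat_of_ord u.2) else 0%R).
exists (fun (u : bool * 'I_N) (i : 'I_2) => if u.1 == (nat_of_ord i == 0%N) then INR (nat_of_ord u.2) else INR N).
have kN : forall k : 'I_N, (0 <= INR k <= INR N)%R.
  move=> k; split; first exact: pos_INR.
  apply: le_INR; apply/leP; exact: ltnW.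
split.
  move=> v i; case: ifP => _; first lra.
  by have := kN v.2; lra.
move=> [b k] [b' k'] Hne; rewrite /KG /=; split.
- move=> Hb i; rewrite /intervals_meet.
  have := kN k; have := kN k'.
  by case: b b' Hb Hne => [] [] //= _ _; case: i => [[|[|i]] Hi] /=; lra.
- move=> H; apply/negP => /eqP Hb; subst b'.
  have Hk : k <> k' by move=> E; subst k'; rewrite eqxx in Hne.
  apply: Hk; apply: val_inj; apply: INR_eq.
  case: b H Hne => H _.
  + have := H ord0; rewrite /intervals_meet /=; lra.
  + have := H (lift ord0 ord0); rewrite /intervals_meet /=; lra.
Qed.

Lemma KG_not_box0 N : (1 < N)%N -> ~ box_rep (@KG N) 0.
Proof.
move=> HN [lo [hi [_ H]]].
have := H (true, Ordinal (ltn_trans (ltnSn 0) HN)) (true, Ordinal HN).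
rewrite /KG /= => /(_ isT) [HH1 HH].
have: false by apply: HH => -[].
by [].
Qed.

Lemma KG_not_box1 N : (1 < N)%N -> ~ box_rep (@KG N) 1.
Proof.
move=> HN [lo [hi [_ H]]].
set k0 : 'I_N := Ordinal (ltn_trans (ltnSn 0) HN).
set k1 : 'I_N := Ordinal HN.
have ne01 : k0 != k1 by [].
have adj : forall x y : 'I_N, intervals_meet (lo (true, x) ord0) (hi (true, x) ord0)
                               (lo (false, y) ord0) (hi (false, y) ord0).
  move=> x y; have := H (true, x) (false, y); rewrite /KG /=.
  by move=> /(_ isT) [/(_ isT) h _]; apply: h.
have nadj : forall b, ~ intervals_meet (lo (b, k0) ord0) (hi (b, k0) ord0)
                               (lo (b, k1) ord0) (hi (b, k1) ord0).
  move=> b hm; have := H (b, k0) (b, k1).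
  have hne : (b, k0) != (b, k1) by rewrite xpair_eqE negb_and ne01 orbT.
  rewrite /KG /= eqxx => /(_ hne) [_ h].
  have : false; last by [].
  apply: h => i; by rewrite (ord1 i).
have := nadj true; have := nadj false.
have := adj k0 k0; have := adj k0 k1; have := adj k1 k0; have := adj k1 k1.
rewrite /intervals_meet.
set a1 := lo (true, k0) ord0; set a2 := hi (true, k0) ord0.
set b1 := lo (true, k1) ord0; set b2 := hi (true, k1) ord0.
set c1 := lo (false, k0) ord0; set c2 := hi (false, k0) ord0.
set d1 := lo (false, k1) ord0; set d2 := hi (false, k1) ord0.
move=> [h1 h2] [h3 h4] [h5 h6] [h7 h8] ncd nab.
destruct (Rle_dec a1 b2); destruct (Rle_dec b1 a2);
  destruct (Rle_dec c1 d2); destruct (Rle_dec d1 c2); try tauto; lra.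
Qed.

Lemma KG_cube N j : (expn 2 j < N)%N -> ~ cube_rep (@KG N) j.
Proof.
move=> HN [lo [s [Hs H]]].
have N0 : (0 < N)%N by apply: leq_ltn_trans HN.
have [v Hv] := exists_min s (true, Ordinal N0).
set b := v.1.
have meet : forall m : 'I_N, forall i, intervals_meet (lo (~~ b, m) i) (lo (~~ b, m) i + s (~~ b, m))%R (lo v i) (lo v i + s v)%R.
  move=> m; have hb : (~~ b != b) by case: (b).
  have hne : (~~ b, m) != v by rewrite /b; case: (v) => [[] x]; rewrite xpair_eqE.
  have := H (~~ b, m) v hne; rewrite /KG /=.
  move=> [h _]; exact: h.
pose f (m : 'I_N) : {ffun 'I_j -> bool} :=
  [ffun i => if Rle_dec (lo (~~ b, m) i) (lo v i) then true else false].
have finj : injective f.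
  move=> m1 m2 Hf; apply/eqP; apply/negP => /negP Hne.
  have := H (~~ b, m1) (~~ b, m2).
  rewrite /KG /= eqxx xpair_eqE eqxx Hne /= => /(_ isT) [_ h].
  have : false; last by []. apply: h => i.
  have := congr1 (fun g : {ffun 'I_j -> bool} => g i) Hf; rewrite /f /= !ffunE.
  have := meet m1 i; have := meet m2 i; have := Hv (~~ b, m1); have := Hv (~~ b, m2).
  rewrite /intervals_meet.
  destruct (Rle_dec (lo (~~ b, m1) i) (lo v i));
  destruct (Rle_dec (lo (~~ b, m2) i) (lo v i)) => //; move=> h1 h2 [h3 h4] [h5 h6] _; split; lra.
have := leq_card f finj.
rewrite card_ffun card_bool !card_ord => hle.
by move: (leq_ltn_trans hle HN); rewrite ltnn.
Qed.

Theorem theorem6 : forall d : nat, (0 < d)%N ->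
  exists (T : finType) (e : rel T),
    simple_graph e /\ boxicity_eq e 2 /\ cubicity_gt e d.
Proof.
move=> d _.
have HN : (1 < (expn 2 d).+1)%N by rewrite ltnS expn_gt0.
exists (bool * 'I_(expn 2 d).+1)%type, (@KG (expn 2 d).+1).
split; first exact: KG_simple.
split.
  split; first exact: KG_box.
  move=> [|[|j]] //= _; [exact: KG_not_box0 | exact: KG_not_box1].
move=> j hj; apply: KG_cube.
by rewrite ltnS leq_pexp2l.
Qed.
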